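(* Let $c>0$ be a constant, let $b_0\in(\pi/2,\pi)$ be the smallest positive solution of $cb+\tan b=0$, set $\alpha_0=1/|\cos b_0|$, and let $\alpha>\alpha_0$. Then the stationary system $$(c\bar u)'=\frac{\alpha\bar v}{1+\bar u+\bar v}-\bar u,\qquad -(c\bar v)'=\frac{\alpha\bar u}{1+\bar u+\bar v}-\bar v\quad\text{on }[0,1],$$ with boundary conditions $\bar u(0)=0$, $\bar v(1)=0$, has a nontrivial solution.
   Context: This is the stationary version of the system $\partial_t u+\partial_x(cu)=\frac{\alpha v}{1+u+v}-u$, $\partial_t v-\partial_x(cv)=\frac{\alpha u}{1+u+v}-v$ with Dirichlet-type boundary conditions (DBC) $u(0,t)=0$, $v(1,t)=0$. *)

(* Defs.v *)
From Stdlib Require Export Reals.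
Open Scope R_scope.

Definition smallest_pos_root (c b0 : R) : Prop :=
  0 < b0 /\ cos b0 <> 0 /\ c * b0 + tan b0 = 0 /\
  (forall b, 0 < b < b0 -> cos b <> 0 -> c * b + tan b <> 0).

Definition stationary_solution (c alpha : R) (u v : R -> R) : Prop :=
  exists u' v' : R -> R,
    (forall x, derivable_pt_lim u x (u' x)) /\
    (forall x, derivable_pt_lim v x (v' x)) /\
    (forall x, 0 <= x <= 1 ->
       1 + u x + v x <> 0 /\
       c * u' x = alpha * v x / (1 + u x + v x) - u x /\
       - (c * v' x) = alpha * u x / (1 + u x + v x) - v x) /\
    u 0 = 0 /\ v 1 = 0.

(* Main.v *)
Require Import Defs.
From Coquelicot Require Import Coquelicot.
From Stdlib Require Import Reals Lra Psatz Ranalysis5 ClassicalEpsilon.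
Open Scope R_scope.

Lemma cmp_deriv (f h f' h' : R -> R) (p q : R) : p <= q ->
  (forall x, p <= x <= q -> derivable_pt_lim f x (f' x)) ->
  (forall x, p <= x <= q -> derivable_pt_lim h x (h' x)) ->
  (forall x, p < x < q -> f' x <= h' x) ->
  f q - f p <= h q - h p.
Proof.
  intros Hpq Hf Hh Hle. destruct (Req_dec p q) as [->|Hne]; [lra|].
  destruct (MVT_cor2 (fun x => h x - f x) (fun x => h' x - f' x) p q) as [z [Hz1 Hz2]].
  - lra.
  - intros z Hz. apply derivable_pt_lim_minus; auto.
  - specialize (Hle z Hz2). nra.
Qed.

Section Inv.
Variables (f f' : R -> R) (p q : R).
Hypothesis Hpq : p < q.
Hypothesis Hd : forall x, p <= x <= q -> derivable_pt_lim f x (f' x).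
Hypothesis Hpos : forall x, p < x < q -> 0 < f' x.

Lemma inv_incr : forall x y, p <= x -> x < y -> y <= q -> f x < f y.
Proof.
  intros x y Hx Hxy Hy.
  destruct (MVT_cor2 f f' x y Hxy) as [z [Hz1 Hz2]].
  - intros z Hz; apply Hd; lra.
  - assert (0 < f' z) by (apply Hpos; lra). nra.
Qed.

Lemma inv_le : forall x y, p <= x <= q -> p <= y <= q -> f x <= f y -> x <= y.
Proof.
  intros x y Hx Hy H. destruct (Rle_or_lt x y) as [|Hlt]; auto.
  assert (f y < f x) by (apply inv_incr; lra). lra.
Qed.

Lemma inv_cont : forall x, p <= x <= q -> continuity_pt f x.
Proof. intros x Hx. apply derivable_continuous_pt. exists (f' x). now apply Hd. Qed.

Definition finv (y : R) : R :=
  epsilon (inhabits 0) (fun x => p <= x <= q /\ f x = y).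

Lemma finv_spec y : f p <= y <= f q -> p <= finv y <= q /\ f (finv y) = y.
Proof.
  intros Hy. unfold finv. apply epsilon_spec.
  destruct (f_interv_is_interv f p q y Hpq Hy inv_cont) as [x Hx].
  exists x; exact Hx.
Qed.

Lemma finv_f x : p <= x <= q -> finv (f x) = x.
Proof.
  intros Hx. assert (Hy : f p <= f x <= f q).
  { split; apply (Rle_trans _ _ _ (Rle_refl _)).
    destruct (Req_dec p x) as [->|]; [lra|]. left; apply inv_incr; lra.
    destruct (Req_dec x q) as [->|]; [lra|]. left; apply inv_incr; lra. }
  destruct (finv_spec _ Hy) as [H1 H2].
  apply Rle_antisym; apply inv_le; lra.
Qed.

Lemma fp_lt_fq : f p < f q.
Proof. apply inv_incr; lra. Qed.

Lemma finv_cont y : f p < y < f q -> continuity_pt finv y.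
Proof.
  intros Hy. apply (continuity_pt_recip_interv f finv p q Hpq).
  - intros; apply inv_incr; lra.
  - intros z Hz1 Hz2. unfold comp, id. apply finv_spec; lra.
  - intros z Hz1 Hz2. apply finv_spec; lra.
  - exact inv_cont.
  - exact Hy.
Qed.

Lemma finv_mono y1 y2 : f p <= y1 <= f q -> f p <= y2 <= f q -> y1 <= y2 -> finv y1 <= finv y2.
Proof.
  intros H1 H2 H. destruct (finv_spec _ H1), (finv_spec _ H2).
  apply inv_le; lra.
Qed.

Lemma finv_deriv y : f p < y < f q -> derivable_pt_lim finv y (1 / f' (finv y)).
Proof.
  intros Hy.
  assert (Hp : finv (f p) = p) by (apply finv_f; lra).
  assert (Hq : finv (f q) = q) by (apply finv_f; lra).
  assert (Prf : forall a, finv (f p) <= a <= finv (f q) -> derivable_pt f a).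
  { intros a Ha. rewrite Hp, Hq in Ha. exists (f' a). now apply Hd. }
  assert (Hyb : f p <= y <= f q) by lra.
  destruct (finv_spec _ Hyb) as [Hb Hfb].
  assert (Hin : p < finv y < q).
  { split.
    - destruct (Rle_lt_or_eq_dec _ _ (proj1 Hb)) as [|E]; auto.
      rewrite <- E in Hfb. lra.
    - destruct (Rle_lt_or_eq_dec _ _ (proj2 Hb)) as [|E]; auto.
      rewrite E in Hfb. lra. }
  assert (Hincr : finv (f p) <= finv y <= finv (f q)) by (rewrite Hp, Hq; lra).
  assert (Hder : derive_pt f (finv y) (Prf (finv y) Hincr) = f' (finv y)).
  { apply derive_pt_eq_0. apply Hd; lra. }
  rewrite <- Hder.
  apply (derivable_pt_lim_recip_interv f finv (f p) (f q) y Prf (finv_cont y Hy)).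
  - apply fp_lt_fq.
  - exact Hy.
  - intros z Hz. unfold comp, id. apply finv_spec; lra.
  - rewrite Hder. specialize (Hpos _ Hin). lra.
Qed.
End Inv.

Lemma sq_le y z : 0 <= z -> y * y <= z * z -> y <= z.
Proof. intros. nra. Qed.

Lemma sqrt_gt_abs t k : 0 < k -> 0 < t + sqrt (t*t + k).
Proof.
  intros Hk. assert (Hs : 0 < sqrt (t*t+k)) by (apply sqrt_lt_R0; nra).
  assert (E : sqrt (t*t+k) * sqrt (t*t+k) = t*t+k) by (apply sqrt_sqrt; nra).
  destruct (Rle_or_lt 0 t); [lra|]. nra.
Qed.

Lemma I2_is (C k : R) : 0 < k ->
  is_RInt (fun t => C / sqrt (t*t + k)) (-1) 1 (C * (ln (1 + sqrt (1 + k)) - ln (-1 + sqrt (1 + k)))).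
Proof.
  intros Hk.
  assert (E : C * (ln (1 + sqrt (1 + k)) - ln (-1 + sqrt (1 + k))) =
    minus ((fun t => C * ln (t + sqrt (t*t+k))) 1) ((fun t => C * ln (t + sqrt (t*t+k))) (-1))).
  { simpl. unfold minus, plus, opp; simpl. replace (1*1+k) with (1+k) by ring.
    replace (-1*-1+k) with (1+k) by ring. ring. }
  rewrite E. apply (is_RInt_derive (V:=R_CompleteNormedModule) (fun t => C * ln (t + sqrt (t*t+k))) (fun t => C / sqrt (t*t + k))).
  - intros x _. auto_derive.
    + split; [nra|]. split; [apply sqrt_gt_abs; auto|auto].
    + assert (Hs : 0 < sqrt (x*x+k)) by (apply sqrt_lt_R0; nra).
      pose proof (sqrt_gt_abs x k Hk). field. lra.
  - intros x _. apply continuity_pt_filterlim. apply derivable_continuous_pt.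
    apply ex_derive_Reals_0. auto_derive. assert (0 < sqrt (x*x+k)) by (apply sqrt_lt_R0; nra).
    split; [nra|]. split; [lra|auto].
Qed.

Lemma asin_dlim z : -1 < z < 1 -> derivable_pt_lim asin z (1 / sqrt (1 - z*z)).
Proof.
  intros Hz. apply (derive_pt_eq_1 _ _ _ (derivable_pt_asin z Hz)).
  rewrite derive_pt_asin. reflexivity.
Qed.

Lemma I1_is (C K : R) : 1 < K ->
  is_RInt (fun t => C / sqrt (K - t*t)) (-1) 1 (2 * C * asin (1 / sqrt K)).
Proof.
  intros HK.
  assert (HsK : 0 < sqrt K) by (apply sqrt_lt_R0; lra).
  assert (EK : sqrt K * sqrt K = K) by (apply sqrt_sqrt; lra).
  assert (E : 2 * C * asin (1 / sqrt K) =
    minus ((fun t => C * asin (t / sqrt K)) 1) ((fun t => C * asin (t / sqrt K)) (-1))).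
  { simpl. unfold minus, plus, opp; simpl. replace (-1 / sqrt K) with (- (1 / sqrt K)) by (field; lra).
    rewrite asin_opp. ring. }
  rewrite E. apply (is_RInt_derive (V:=R_CompleteNormedModule) (fun t => C * asin (t / sqrt K)) (fun t => C / sqrt (K - t*t))).
  - intros x Hx. rewrite Rmin_left, Rmax_right in Hx by lra.
    assert (Hz : -1 < x / sqrt K < 1).
    { assert (1 < sqrt K).
      { rewrite <- sqrt_1. apply sqrt_lt_1; lra. }
      split; [apply Rmult_lt_reg_r with (sqrt K); auto; unfold Rdiv; rewrite Rmult_assoc, Rinv_l; lra|].
      apply Rmult_lt_reg_r with (sqrt K); auto; unfold Rdiv; rewrite Rmult_assoc, Rinv_l; lra. }
    apply is_derive_Reals.
    replace (C / sqrt (K - x*x)) with (C * (1 / sqrt (1 - (x / sqrt K) * (x / sqrt K)) * (1 / sqrt K))).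
    + apply derivable_pt_lim_scal.
      apply (derivable_pt_lim_comp (fun t => t / sqrt K) asin x (1 / sqrt K)).
      * apply is_derive_Reals. auto_derive; [lra|]. field; lra.
      * apply asin_dlim; auto.
    + assert (E2 : 1 - x / sqrt K * (x / sqrt K) = (K - x*x) / K).
      { replace (x / sqrt K * (x / sqrt K)) with (x*x/(sqrt K*sqrt K)) by (field; lra). rewrite EK. field; lra. }
      rewrite E2. assert (0 < K - x*x) by nra.
      assert (E3 : sqrt ((K - x*x)/K) * sqrt K = sqrt (K - x*x)).
      { rewrite <- sqrt_mult. f_equal. field. lra. apply Rdiv_le_0_compat; lra. lra. }
      assert (0 < sqrt ((K - x*x)/K)) by (apply sqrt_lt_R0; apply Rdiv_lt_0_compat; lra).
      rewrite <- E3. field. lra.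
  - intros x Hx. rewrite Rmin_left, Rmax_right in Hx by lra.
    apply continuity_pt_filterlim. apply derivable_continuous_pt.
    assert (x*x <= 1) by nra.
    apply ex_derive_Reals_0. auto_derive.
    split; [lra|]. split; [|auto]. apply Rgt_not_eq, sqrt_lt_R0; lra.
Qed.

Lemma glue (Fn f : R -> R) x l d0 : 0 < d0 -> derivable_pt_lim f x l -> Fn x = f x ->
  (forall h, h <> 0 -> Rabs h < d0 -> Fn (x+h) = f (x+h) \/ Fn (x+h) = Fn x + l*h) ->
  derivable_pt_lim Fn x l.
Proof.
  intros Hd0 Hf Hx Hh eps He.
  destruct (Hf eps He) as [d Hd].
  assert (Hm : 0 < Rmin d d0) by (apply Rmin_pos; [apply cond_pos|lra]).
  exists (mkposreal _ Hm). simpl. intros h Hh0 Hhd.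
  assert (Hh1 : Rabs h < d) by (apply Rlt_le_trans with (Rmin d d0); [lra|apply Rmin_l]).
  assert (Hh2 : Rabs h < d0) by (apply Rlt_le_trans with (Rmin d d0); [lra|apply Rmin_r]).
  destruct (Hh h Hh0 Hh2) as [E|E]; rewrite E.
  - rewrite Hx. apply Hd; auto.
  - replace ((Fn x + l * h - Fn x) / h - l) with 0 by (field; auto). rewrite Rabs_R0. lra.
Qed.

Definition ext (f f' : R -> R) (x : R) :=
  if Rlt_dec x 0 then f 0 + f' 0 * x else if Rlt_dec 1 x then f 1 + f' 1 * (x - 1) else f x.
Definition ext' (f' : R -> R) (x : R) :=
  if Rlt_dec x 0 then f' 0 else if Rlt_dec 1 x then f' 1 else f' x.

Lemma ext_in f f' x : 0 <= x <= 1 -> ext f f' x = f x /\ ext' f' x = f' x.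
Proof. intros. unfold ext, ext'. destruct Rlt_dec; [lra|]. destruct Rlt_dec; [lra|]. auto. Qed.

Lemma ext_deriv f f' : (forall x, 0 <= x <= 1 -> derivable_pt_lim f x (f' x)) ->
  forall x, derivable_pt_lim (ext f f') x (ext' f' x).
Proof.
  intros Hf x.
  assert (Lin : forall p q r, derivable_pt_lim (fun z => p + q * (z - r)) x q).
  { intros. apply is_derive_Reals. auto_derive; auto. ring. }
  destruct (Rlt_or_le x 0) as [Hx|Hx].
  - assert (E : ext' f' x = f' 0) by (unfold ext'; destruct Rlt_dec; [auto|lra]). rewrite E.
    apply (glue _ (fun z => f 0 + f' 0 * (z - 0)) x _ (-x)); [lra|apply Lin| |].
    + unfold ext. destruct Rlt_dec; [ring|lra].
    + intros h _ Hh. left. unfold ext. destruct Rlt_dec; [ring|]. exfalso. apply Rabs_def2 in Hh. lra.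
  - destruct (Rlt_or_le 1 x) as [Hx1|Hx1].
    + assert (E : ext' f' x = f' 1) by (unfold ext'; destruct Rlt_dec; [lra|]; destruct Rlt_dec; [auto|lra]). rewrite E.
      apply (glue _ (fun z => f 1 + f' 1 * (z - 1)) x _ (x-1)); [lra|apply Lin| |].
      * unfold ext. destruct Rlt_dec; [lra|]. destruct Rlt_dec; [ring|lra].
      * intros h _ Hh. left. apply Rabs_def2 in Hh. unfold ext. destruct Rlt_dec; [lra|]. destruct Rlt_dec; [ring|lra].
    + destruct (ext_in f f' x ltac:(lra)) as [E1 E2]. rewrite E2.
      destruct (Rlt_or_le 0 x) as [Hx0|Hx0]; destruct (Rlt_or_le x 1) as [Hx2|Hx2].
      * apply (glue _ f x _ (Rmin x (1-x))); [apply Rmin_pos; lra|apply Hf; lra|auto|].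
        intros h _ Hh. left. assert (Rabs h < x) by (eapply Rlt_le_trans; [exact Hh|apply Rmin_l]).
        assert (Rabs h < 1-x) by (eapply Rlt_le_trans; [exact Hh|apply Rmin_r]).
        apply Rabs_def2 in H. apply Rabs_def2 in H0. apply ext_in; lra.
      * assert (x = 1) by lra. subst x.
        apply (glue _ f 1 _ 1); [lra|apply Hf; lra|auto|].
        intros h Hh0 Hh. apply Rabs_def2 in Hh. destruct (Rlt_or_le h 0).
        -- left. apply ext_in; lra.
        -- right. rewrite E1. unfold ext. destruct Rlt_dec; [lra|]. destruct Rlt_dec; [|lra].
           replace (1 + h - 1) with h by ring. reflexivity.
      * assert (x = 0) by lra. subst x.
        apply (glue _ f 0 _ 1); [lra|apply Hf; lra|auto|].
        intros h Hh0 Hh. apply Rabs_def2 in Hh. destruct (Rlt_or_le 0 h).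
        -- left. apply ext_in; lra.
        -- right. rewrite E1. unfold ext. destruct Rlt_dec; [|lra].
           replace (0 + h) with h by ring. reflexivity.
      * lra.
Qed.

Lemma dlim_half f x l : derivable_pt_lim f x l -> derivable_pt_lim (fun y => f y / 2) x (l/2).
Proof.
  intros H eps He. destruct (derivable_pt_lim_scal f (/2) x l H eps He) as [d Hd].
  exists d. intros h Hh0 Hh. unfold mult_real_fct in Hd.
  replace ((f (x+h)/2 - f x/2)/h - l/2) with ((/2 * f (x+h) - /2 * f x)/h - /2*l) by (field; auto).
  apply Hd; auto.
Qed.
Section Prob.
Variables c alpha : R.
Hypothesis hc : 0 < c.
Hypothesis hal : 1 < alpha.

Definition Gr (t : R) := -(t*t)/2 + (3*alpha+1)*t - 2*alpha*(alpha+1)*ln t.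
Definition G (s : R) := Gr (alpha+1+s) - Gr (alpha+1).
Definition g (s : R) := s*(alpha-1-s)/(alpha+1+s).
Definition kap := (alpha-1)/(alpha+1).

Lemma G_deriv s : -(alpha+1) < s -> derivable_pt_lim G s (g s).
Proof.
  intros Hs. apply is_derive_Reals. unfold G, Gr, g.
  auto_derive.
  - lra.
  - field. lra.
Qed.

Lemma G0 : G 0 = 0.
Proof. unfold G. rewrite Rplus_0_r. ring. Qed.

Lemma g_pos s : 0 < s < alpha - 1 -> 0 < g s.
Proof. intros Hs. unfold g. apply Rdiv_lt_0_compat; nra. Qed.

Lemma G_d01 : forall x, 0 <= x <= alpha-1 -> derivable_pt_lim G x (g x).
Proof. intros x Hx. apply G_deriv. lra. Qed.

Lemma G_pq : 0 < alpha - 1. Proof. lra. Qed.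

Definition Gm := G (alpha - 1).

Lemma G_incr x y : 0 <= x -> x < y -> y <= alpha-1 -> G x < G y.
Proof. apply (inv_incr G g 0 (alpha-1) G_d01 g_pos). Qed.

Lemma G_le x y : 0 <= x <= alpha-1 -> 0 <= y <= alpha-1 -> G x <= G y -> x <= y.
Proof. apply (inv_le G g 0 (alpha-1) G_d01 g_pos). Qed.

Lemma Gm_pos : 0 < Gm.
Proof. unfold Gm. rewrite <- G0. apply G_incr; lra. Qed.

Definition Ginv := finv G 0 (alpha-1).

Lemma Ginv_spec y : 0 <= y <= Gm -> 0 <= Ginv y <= alpha-1 /\ G (Ginv y) = y.
Proof.
  intros Hy. unfold Ginv. apply (finv_spec G g); auto using G_pq, G_d01, g_pos.
  rewrite G0. exact Hy.
Qed.

Lemma Ginv_G s : 0 <= s <= alpha-1 -> Ginv (G s) = s.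
Proof. intros; unfold Ginv; apply (finv_f G g); auto using G_pq, G_d01, g_pos. Qed.

Lemma Ginv_cont y : 0 < y < Gm -> continuity_pt Ginv y.
Proof.
  intros; unfold Ginv; apply (finv_cont G g); auto using G_pq, G_d01, g_pos.
  rewrite G0; exact H.
Qed.

Lemma Ginv_deriv y : 0 < y < Gm -> derivable_pt_lim Ginv y (1 / g (Ginv y)).
Proof.
  intros; unfold Ginv; apply (finv_deriv G g); auto using G_pq, G_d01, g_pos.
  rewrite G0; exact H.
Qed.

Lemma Ginv_mono y1 y2 : 0 <= y1 <= Gm -> 0 <= y2 <= Gm -> y1 <= y2 -> Ginv y1 <= Ginv y2.
Proof.
  intros; unfold Ginv; apply (finv_mono G g); auto using G_pq, G_d01, g_pos; rewrite G0; auto.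
Qed.

Lemma Ginv_pos y : 0 < y <= Gm -> 0 < Ginv y.
Proof.
  intros Hy. destruct (Ginv_spec y) as [[H1 H2] H3]; [lra|].
  destruct (Rle_lt_or_eq_dec _ _ H1) as [|E]; auto. rewrite <- E, G0 in H3. lra.
Qed.

Lemma Ginv_lt y : 0 <= y < Gm -> Ginv y < alpha - 1.
Proof.
  intros Hy. destruct (Ginv_spec y) as [[H1 H2] H3]; [lra|].
  destruct (Rle_lt_or_eq_dec _ _ H2) as [|E]; auto. rewrite E in H3. unfold Gm in Hy. lra.
Qed.

Lemma G_upper s : 0 <= s -> G s <= kap * (s*s) / 2.
Proof.
  intros Hs.
  enough (G s - G 0 <= kap*(s*s)/2 - kap*(0*0)/2) by (rewrite G0 in H; lra).
  apply (cmp_deriv G (fun x => kap*(x*x)/2) g (fun x => kap * x)); auto.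
  - intros; apply G_deriv; lra.
  - intros x _. apply is_derive_Reals. auto_derive; auto. field.
  - intros x Hx. unfold g, kap.
    replace (x*(alpha-1-x)/(alpha+1+x)) with ((alpha-1)/(alpha+1)*x - 2*alpha*x*x/((alpha+1)*(alpha+1+x))) by (field; lra).
    assert (0 <= 2*alpha*x*x/((alpha+1)*(alpha+1+x))) by (apply Rdiv_le_0_compat; nra).
    lra.
Qed.

Lemma le_div a b y : 0 < y -> a * y <= b -> a <= b / y.
Proof. intros. apply Rmult_le_reg_r with y; auto. unfold Rdiv. rewrite Rmult_assoc, Rinv_l, Rmult_1_r; lra. Qed.

Lemma div_le a b y : 0 < y -> b <= a * y -> b / y <= a.
Proof. intros. apply Rmult_le_reg_r with y; auto. unfold Rdiv. rewrite Rmult_assoc, Rinv_l, Rmult_1_r; lra. Qed.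

Lemma muldiv_le A B C D : 0 < B -> A * C <= D * B -> A / B * C <= D.
Proof. intros. replace (A/B*C) with ((A*C)/B) by (field; lra). apply div_le; lra. Qed.

Definition km (m : R) := (alpha-1-m)/(alpha+1+m).

Lemma G_lower m s : 0 <= s <= m -> m <= alpha - 1 -> km m * (s*s) / 2 <= G s.
Proof.
  intros Hs Hm.
  enough (km m*(s*s)/2 - km m*(0*0)/2 <= G s - G 0) by (rewrite G0 in H; lra).
  apply (cmp_deriv (fun x => km m*(x*x)/2) G (fun x => km m * x) g); try lra.
  - intros x _. apply is_derive_Reals. auto_derive; auto. field.
  - intros; apply G_deriv; lra.
  - intros x Hx. unfold g, km.
    replace (x*(alpha-1-x)/(alpha+1+x)) with ((alpha-1-m)/(alpha+1+m)*x + 2*alpha*x*(m-x)/((alpha+1+x)*(alpha+1+m))) by (field; lra).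
    assert (0 <= 2*alpha*x*(m-x)/((alpha+1+x)*(alpha+1+m))).
    { apply Rdiv_le_0_compat; [|nra]. apply Rmult_le_pos; nra. }
    lra.
Qed.

Lemma G_top a s : 0 < a <= s -> s <= alpha - 1 -> a*((alpha-1-s)*(alpha-1-s))/(4*alpha) <= Gm - G s.
Proof.
  intros Ha Hs. unfold Gm.
  enough ((- a*((alpha-1-(alpha-1))*(alpha-1-(alpha-1)))/(4*alpha)) - (- a*((alpha-1-s)*(alpha-1-s))/(4*alpha)) <= G (alpha-1) - G s) by lra.
  apply (cmp_deriv (fun x => - a*((alpha-1-x)*(alpha-1-x))/(4*alpha)) G (fun x => a*(alpha-1-x)/(2*alpha)) g); try lra.
  - intros x _. apply is_derive_Reals. auto_derive; auto. field. lra.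
  - intros; apply G_deriv; lra.
  - intros x Hx. unfold g.
    apply le_div; [lra|]. apply muldiv_le; [lra|].
    assert (0 <= alpha - 1 - x) by lra.
    assert (a * (alpha + 1 + x) <= x * (2*alpha)) by nra.
    nra.
Qed.

Lemma G_lip l r x y : 0 < l <= x -> x <= y -> y <= r -> r <= alpha - 1 ->
  l*(alpha-1-r)/(2*alpha) * (y - x) <= G y - G x.
Proof.
  intros Hl Hxy Hyr Hr.
  enough (l*(alpha-1-r)/(2*alpha) * y - l*(alpha-1-r)/(2*alpha) * x <= G y - G x) by lra.
  apply (cmp_deriv (fun z => l*(alpha-1-r)/(2*alpha) * z) G (fun _ => l*(alpha-1-r)/(2*alpha)) g); try lra.
  - intros z _. apply is_derive_Reals. auto_derive; auto. field. lra.
  - intros; apply G_deriv; lra.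
  - intros z Hz. unfold g.
    apply le_div; [lra|]. apply muldiv_le; [lra|].
    assert (0 <= alpha - 1 - r) by lra.
    assert (l * (alpha-1-r) <= z * (alpha-1-z)) by nra.
    assert (0 <= l*(alpha-1-r)) by nra.
    nra.
Qed.

Definition h (a : R) := G a + a*a/2.

Lemma h_deriv a : -(alpha+1) < a -> derivable_pt_lim h a (g a + a).
Proof.
  intros Ha. unfold h. apply derivable_pt_lim_plus. now apply G_deriv.
  apply is_derive_Reals. auto_derive; auto. field.
Qed.

Lemma h_lip x y : 0 <= x <= y -> y <= alpha - 1 -> 0 <= h y - h x <= (kap+1)*(alpha-1)*(y-x).
Proof.
  intros Hx Hy. split.
  - enough (0*y - 0*x <= h y - h x) by lra.
    apply (cmp_deriv (fun z => 0*z) h (fun _ => 0) (fun z => g z + z)); try lra.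
    + intros z _. apply is_derive_Reals. auto_derive; auto. ring.
    + intros; apply h_deriv; lra.
    + intros z Hz. assert (0 < g z) by (apply g_pos; lra). lra.
  - enough (h y - h x <= (kap+1)*(alpha-1)*y - (kap+1)*(alpha-1)*x) by lra.
    apply (cmp_deriv h (fun z => (kap+1)*(alpha-1)*z) (fun z => g z + z) (fun _ => (kap+1)*(alpha-1))); try lra.
    + intros; apply h_deriv; lra.
    + intros z _. apply is_derive_Reals. auto_derive; auto. ring.
    + intros z Hz. unfold g, kap.
      assert (z*(alpha-1-z)/(alpha+1+z) <= (alpha-1)/(alpha+1)*(alpha-1)).
      { apply div_le; [lra|].
        assert (0 <= (alpha-1)/(alpha+1)) by (apply Rdiv_le_0_compat; lra).
        assert ((alpha-1)/(alpha+1)*(alpha-1)*(alpha+1+z) = (alpha-1)*(alpha-1) + (alpha-1)/(alpha+1)*(alpha-1)*z) by (field; lra).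
        assert (0 <= (alpha-1)/(alpha+1)*(alpha-1)*z) by (apply Rmult_le_pos; [apply Rmult_le_pos|]; lra).
        nra. }
      nra.
Qed.

Lemma h_mono x y : 0 <= x <= y -> y <= alpha - 1 -> h x <= h y.
Proof. intros; pose proof (h_lip x y); lra. Qed.

Lemma h0 : h 0 = 0.
Proof. unfold h. rewrite G0. field. Qed.

Definition Phi (s : R) := c*(1+s)/(s*(alpha-1-s)).
Definition Y (a t : R) := h a - a*a*(t*t)/2.
Definition S (a t : R) := Ginv (Y a t).
Definition F (a t : R) := a * Phi (S a t).
Definition T (a : R) := RInt (F a) (-1) 1.
Definition adm (a : R) := 0 < a < alpha - 1 /\ h a < Gm.

Lemma Phi_deriv s : 0 < s < alpha - 1 -> derivable_pt Phi s.
Proof.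
  intros Hs. apply ex_derive_Reals_0. unfold Phi. auto_derive.
  apply Rmult_integral_contrapositive; split; lra.
Qed.

Lemma Phi_cont s : 0 < s < alpha - 1 -> continuity_pt Phi s.
Proof. intros; apply derivable_continuous_pt; now apply Phi_deriv. Qed.

Lemma Phi_pos s : 0 < s < alpha - 1 -> 0 < Phi s.
Proof. intros; unfold Phi; apply Rdiv_lt_0_compat; [nra|]. apply Rmult_lt_0_compat; lra. Qed.

Lemma Y_deriv a t : derivable_pt_lim (Y a) t (-(a*a*t)).
Proof. apply is_derive_Reals. unfold Y. auto_derive; auto. field. Qed.

Lemma Y_cont a t : continuity_pt (Y a) t.
Proof. apply derivable_continuous_pt. exists (-(a*a*t)). apply Y_deriv. Qed.

Lemma S_bounds a t : 0 < Y a t < Gm -> 0 < S a t < alpha - 1.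
Proof.
  intros H; unfold S; split; [apply Ginv_pos | apply Ginv_lt]; lra.
Qed.

Lemma S_cont a t : 0 < Y a t < Gm -> continuity_pt (S a) t.
Proof.
  intros H. change (continuity_pt (comp Ginv (Y a)) t).
  apply continuity_pt_comp. apply Y_cont. apply Ginv_cont; auto.
Qed.

Lemma S_deriv a t : 0 < Y a t < Gm -> derivable_pt_lim (S a) t (1 / g (S a t) * (-(a*a*t))).
Proof.
  intros H. change (derivable_pt_lim (comp Ginv (Y a)) t (1 / g (Ginv (Y a t)) * (-(a*a*t)))).
  apply derivable_pt_lim_comp. apply Y_deriv. apply Ginv_deriv; auto.
Qed.

Lemma F_cont a t : 0 < Y a t < Gm -> continuity_pt (F a) t.
Proof.
  intros H. unfold F. apply continuity_pt_mult. apply continuity_pt_const; intros ? ?; auto.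
  change (continuity_pt (comp Phi (S a)) t). apply continuity_pt_comp.
  now apply S_cont. apply Phi_cont. now apply S_bounds.
Qed.

Lemma Ga_pos a : 0 < a <= alpha - 1 -> 0 < G a.
Proof. intros. rewrite <- G0. apply G_incr; lra. Qed.

Lemma Y_range a t : adm a -> -1 <= t <= 1 -> G a <= Y a t <= h a.
Proof.
  intros [Ha Hh] Ht. unfold Y, h. assert (t*t <= 1) by nra. split; nra.
Qed.

Lemma Y_pos a t : adm a -> -1 <= t <= 1 -> 0 < Y a t < Gm.
Proof.
  intros Ha Ht. pose proof (Y_range a t Ha Ht). pose proof (Ga_pos a).
  destruct Ha. assert (0 < G a) by (apply H0; lra). lra.
Qed.

Lemma S_range a t : adm a -> -1 <= t <= 1 -> a <= S a t <= Ginv (h a) /\ Ginv (h a) < alpha - 1.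
Proof.
  intros Ha Ht. pose proof (Y_range a t Ha Ht). pose proof (Y_pos a t Ha Ht).
  destruct Ha as [Ha1 Ha2]. pose proof (Ga_pos a).
  assert (0 <= h a) by (pose proof (h_mono 0 a) as HH; rewrite h0 in HH; apply HH; lra).
  split; [split|].
  - rewrite <- (Ginv_G a) at 1 by lra. unfold S. apply Ginv_mono; lra.
  - unfold S. apply Ginv_mono; lra.
  - apply Ginv_lt; lra.
Qed.

Lemma F_cont_adm a t : adm a -> -1 <= t <= 1 -> continuity_pt (F a) t.
Proof. intros; apply F_cont, Y_pos; auto. Qed.

Lemma T_ex a : adm a -> ex_RInt (F a) (-1) 1.
Proof.
  intros Ha. apply (@ex_RInt_continuous R_CompleteNormedModule). intros z Hz.
  rewrite Rmin_left, Rmax_right in Hz by lra.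
  apply continuity_pt_filterlim. now apply F_cont_adm.
Qed.

Lemma Phi_bound l r x : 0 < l <= x -> x <= r -> r < alpha - 1 -> Phi x <= c*(1+r)/(l*(alpha-1-r)).
Proof.
  intros Hl Hx Hr. unfold Phi. apply div_le; [apply Rmult_lt_0_compat; lra|].
  replace (c*(1+r)/(l*(alpha-1-r)) * (x*(alpha-1-x))) with (c*(1+r)*(x*(alpha-1-x)) / (l*(alpha-1-r))) by (field; lra).
  apply le_div; [apply Rmult_lt_0_compat; lra|].
  assert (c*(1+x) <= c*(1+r)) by nra.
  assert (l*(alpha-1-r) <= x*(alpha-1-x)) by nra.
  assert (0 <= c*(1+x)) by nra. assert (0 <= l*(alpha-1-r)) by nra. nra.
Qed.

Lemma Phi_lip l r x y : 0 < l <= x -> x <= r -> l <= y -> y <= r -> r < alpha - 1 ->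
  Rabs (Phi x - Phi y) <= c*(3*(alpha-1)+(alpha-1)*(alpha-1))/(l*l*((alpha-1-r)*(alpha-1-r))) * Rabs (x - y).
Proof.
  intros Hl Hx Hly Hy Hr.
  assert (E : Phi x - Phi y = c*(x-y)*(-(alpha-1) + x + y + x*y)/(x*y*((alpha-1-x)*(alpha-1-y)))).
  { unfold Phi. field. repeat split; lra. }
  rewrite E. unfold Rdiv. rewrite !Rabs_mult. rewrite Rabs_inv.
  assert (D1 : l*l*((alpha-1-r)*(alpha-1-r)) <= x*y*((alpha-1-x)*(alpha-1-y))).
  { assert (l*l <= x*y) by nra. assert ((alpha-1-r)*(alpha-1-r) <= (alpha-1-x)*(alpha-1-y)) by nra.
    apply Rmult_le_compat; nra. }
  assert (D0 : 0 < l*l*((alpha-1-r)*(alpha-1-r))) by (apply Rmult_lt_0_compat; nra).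
  rewrite (Rabs_right (x*y*_)) by nra.
  rewrite Rabs_right with (r:=c) by lra.
  assert (N : Rabs (-(alpha-1) + x + y + x*y) <= 3*(alpha-1)+(alpha-1)*(alpha-1)).
  { apply Rabs_le. split; nra. }
  assert (I : / (x*y*((alpha-1-x)*(alpha-1-y))) <= / (l*l*((alpha-1-r)*(alpha-1-r)))).
  { apply Rinv_le_contravar; auto. }
  assert (0 <= Rabs (x-y)) by apply Rabs_pos.
  assert (0 <= Rabs (-(alpha-1) + x + y + x*y)) by apply Rabs_pos.
  assert (0 < / (x*y*((alpha-1-x)*(alpha-1-y)))) by (apply Rinv_0_lt_compat; repeat apply Rmult_lt_0_compat; lra).
  assert (c * Rabs (x-y) * Rabs (-(alpha-1) + x + y + x*y) <= c * Rabs (x-y) * (3*(alpha-1)+(alpha-1)*(alpha-1))).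
  { apply Rmult_le_compat_l; [apply Rmult_le_pos; lra|lra]. }
  apply Rle_trans with (c * Rabs (x - y) * (3*(alpha-1)+(alpha-1)*(alpha-1)) * / (l*l*((alpha-1-r)*(alpha-1-r)))).
  - apply Rmult_le_compat; try lra. apply Rmult_le_pos; [apply Rmult_le_pos|]; lra.
  - right. field. lra.
Qed.

Lemma Ginv_lip l r y1 y2 : 0 < l -> r < alpha - 1 ->
  0 <= y1 <= Gm -> 0 <= y2 <= Gm ->
  l <= Ginv y1 <= r -> l <= Ginv y2 <= r ->
  Rabs (Ginv y1 - Ginv y2) <= Rabs (y1 - y2) / (l*(alpha-1-r)/(2*alpha)).
Proof.
  intros Hl Hr Hy1 Hy2 H1 H2.
  assert (Hm : 0 < l*(alpha-1-r)/(2*alpha)) by (apply Rdiv_lt_0_compat; nra).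
  destruct (Ginv_spec y1 Hy1) as [_ E1]. destruct (Ginv_spec y2 Hy2) as [_ E2].
  apply le_div; auto.
  destruct (Rle_or_lt (Ginv y1) (Ginv y2)) as [Hle|Hlt].
  - pose proof (G_lip l r (Ginv y1) (Ginv y2) ltac:(lra) Hle ltac:(lra) ltac:(lra)).
    rewrite E1, E2 in H. assert (0 <= l*(alpha-1-r)/(2*alpha) * (Ginv y2 - Ginv y1)) by (apply Rmult_le_pos; lra).
    rewrite Rabs_left1 by lra. rewrite Rabs_left1 by lra. nra.
  - pose proof (G_lip l r (Ginv y2) (Ginv y1) ltac:(lra) ltac:(lra) ltac:(lra) ltac:(lra)).
    rewrite E1, E2 in H. assert (0 <= l*(alpha-1-r)/(2*alpha) * (Ginv y1 - Ginv y2)) by (apply Rmult_le_pos; lra).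
    rewrite Rabs_right by lra. rewrite Rabs_right by lra. nra.
Qed.

Lemma adm_between a1 a2 a : adm a1 -> adm a2 -> a1 <= a <= a2 -> adm a.
Proof.
  intros [H1 H1'] [H2 H2'] Ha. split; [lra|].
  pose proof (h_mono a a2). apply Rle_lt_trans with (h a2); auto. apply H; lra.
Qed.

Lemma T_lip a1 a2 : adm a1 -> adm a2 -> a1 <= a2 -> exists K, 0 <= K /\
  forall a b, a1 <= a <= a2 -> a1 <= b <= a2 -> Rabs (T a - T b) <= K * Rabs (a - b).
Proof.
  intros A1 A2 H12.
  destruct (S_range a2 0 A2) as [[Hs2' Hs2''] Hs2]; [lra|].
  set (s2 := Ginv (h a2)) in *.
  pose proof A1 as [[Ha1 Ha1'] Hh1].
  set (PM := c*(1+s2)/(a1*(alpha-1-s2))).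
  set (LP := c*(3*(alpha-1)+(alpha-1)*(alpha-1))/(a1*a1*((alpha-1-s2)*(alpha-1-s2)))).
  set (mg := a1*(alpha-1-s2)/(2*alpha)).
  set (Lh := (kap+1)*(alpha-1)).
  assert (Hmg : 0 < mg) by (apply Rdiv_lt_0_compat; [apply Rmult_lt_0_compat|]; lra).
  assert (HLP : 0 <= LP).
  { apply Rdiv_le_0_compat; [|repeat apply Rmult_lt_0_compat; lra]. apply Rmult_le_pos; [lra|]. nra. }
  assert (HPM : 0 <= PM) by (apply Rdiv_le_0_compat; [|apply Rmult_lt_0_compat]; nra).
  pose proof A2 as [[Ha2 Ha2'] Hh2].
  assert (Hkap : 0 <= kap) by (unfold kap; apply Rdiv_le_0_compat; lra).
  assert (HLh : 0 <= Lh) by (unfold Lh; nra).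
  exists (2 * (PM + a2*LP*(Lh + a2)/mg)). split.
  { assert (0 <= a2*LP*(Lh+a2)/mg) by (apply Rdiv_le_0_compat; [apply Rmult_le_pos; [apply Rmult_le_pos|]|]; nra). lra. }
  intros a b Ha Hb.
  assert (Aa : adm a) by (apply (adm_between a1 a2); auto; split; auto).
  assert (Ab : adm b) by (apply (adm_between a1 a2); auto; split; auto).
  assert (Hpt : forall t, -1 <= t <= 1 -> Rabs (F a t - F b t) <= (PM + a2*LP*(Lh + a2)/mg) * Rabs (a - b)).
  { intros t Ht.
    destruct (S_range a t Aa Ht) as [[Sa1 Sa2] _].
    destruct (S_range b t Ab Ht) as [[Sb1 Sb2] _].
    assert (Hha : h a <= h a2) by (apply h_mono; lra).
    assert (Hhb : h b <= h a2) by (apply h_mono; lra).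
    pose proof (Y_pos a t Aa Ht). pose proof (Y_pos b t Ab Ht).
    pose proof (Y_range a t Aa Ht). pose proof (Y_range b t Ab Ht).
    assert (Hha' : 0 <= h a) by (pose proof (Ga_pos a); destruct Aa; lra).
    assert (Hhb' : 0 <= h b) by (pose proof (Ga_pos b); destruct Ab; lra).
    assert (Sa3 : S a t <= s2) by (apply Rle_trans with (Ginv (h a)); auto; apply Ginv_mono; lra).
    assert (Sb3 : S b t <= s2) by (apply Rle_trans with (Ginv (h b)); auto; apply Ginv_mono; lra).
    assert (PSa : Phi (S a t) <= PM) by (apply Phi_bound; lra).
    assert (PSa0 : 0 < Phi (S a t)) by (apply Phi_pos; lra).
    assert (LPb : Rabs (Phi (S a t) - Phi (S b t)) <= LP * Rabs (S a t - S b t)) by (apply Phi_lip; lra).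
    assert (SL : Rabs (S a t - S b t) <= Rabs (Y a t - Y b t) / mg).
    { unfold S in *. apply (Ginv_lip a1 s2); lra. }
    assert (YL : Rabs (Y a t - Y b t) <= (Lh + a2) * Rabs (a - b)).
    { unfold Y.
      replace (h a - a*a*(t*t)/2 - (h b - b*b*(t*t)/2)) with ((h a - h b) - (a - b)*(a+b)*(t*t)/2) by field.
      apply Rle_trans with (Rabs (h a - h b) + Rabs ((a-b)*(a+b)*(t*t)/2)).
      { unfold Rminus at 1. eapply Rle_trans; [apply Rabs_triang|]. rewrite Rabs_Ropp. lra. }
      assert (Rabs (h a - h b) <= Lh * Rabs (a - b)).
      { destruct (Rle_or_lt a b).
        - pose proof (h_lip a b). rewrite Rabs_left1 by lra. rewrite Rabs_left1 by lra. unfold Lh. nra.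
        - pose proof (h_lip b a). rewrite Rabs_right by lra. rewrite Rabs_right by lra. unfold Lh. nra. }
      assert (Rabs ((a-b)*(a+b)*(t*t)/2) <= a2 * Rabs (a - b)).
      { assert (t*t <= 1) by nra. assert (0 <= t*t) by nra.
        assert (0 <= (a+b)*(t*t)/2 <= a2) by (split; [apply Rdiv_le_0_compat; nra| apply div_le; nra]).
        replace ((a-b)*(a+b)*(t*t)/2) with ((a-b)*((a+b)*(t*t)/2)) by field.
        rewrite Rabs_mult. rewrite (Rabs_right ((a+b)*(t*t)/2)) by lra.
        assert (0 <= Rabs (a-b)) by apply Rabs_pos. nra. }
      lra. }
    unfold F.
    replace (a * Phi (S a t) - b * Phi (S b t)) with ((a - b) * Phi (S a t) + b * (Phi (S a t) - Phi (S b t))) by ring.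
    eapply Rle_trans; [apply Rabs_triang|]. rewrite !Rabs_mult.
    rewrite (Rabs_right (Phi _)) by lra. rewrite (Rabs_right b) by lra.
    assert (0 <= Rabs (a - b)) by apply Rabs_pos.
    assert (Rabs (Phi (S a t) - Phi (S b t)) <= LP * ((Lh + a2) * Rabs (a - b) / mg)).
    { eapply Rle_trans; [apply LPb|]. apply Rmult_le_compat_l; auto.
      eapply Rle_trans; [apply SL|]. unfold Rdiv. apply Rmult_le_compat_r; auto. left; apply Rinv_0_lt_compat; auto. }
    assert (b * Rabs (Phi (S a t) - Phi (S b t)) <= a2 * (LP * ((Lh + a2) * Rabs (a - b) / mg))).
    { apply Rmult_le_compat; try lra. apply Rabs_pos. }
    assert (Rabs (a - b) * Phi (S a t) <= Rabs (a-b) * PM) by (apply Rmult_le_compat_l; lra).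
    assert (E : a2 * (LP * ((Lh + a2) * Rabs (a - b) / mg)) = a2*LP*(Lh + a2)/mg * Rabs (a-b)) by (field; lra).
    nra. }
  assert (E : T a - T b = RInt (fun t => F a t - F b t) (-1) 1).
  { unfold T. symmetry. apply (RInt_minus (V:=R_CompleteNormedModule)); apply T_ex; auto. }
  rewrite E.
  eapply Rle_trans.
  - apply abs_RInt_le_const; [lra| |].
    + apply (ex_RInt_minus (V:=R_CompleteNormedModule)); apply T_ex; auto.
    + intros t Ht. apply Hpt. exact Ht.
  - right. ring.
Qed.

Lemma lip_continuity (f : R -> R) K : 0 <= K -> (forall x y, Rabs (f x - f y) <= K * Rabs (x - y)) -> continuity f.
Proof.
  intros HK Hf x. unfold continuity_pt, continue_in, limit1_in, limit_in. intros eps He.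
  exists (eps / (K + 1)). split. apply Rdiv_lt_0_compat; lra.
  intros y [_ Hy]. simpl in *. unfold R_dist in *.
  eapply Rle_lt_trans; [apply Hf|].
  assert (0 <= Rabs (y - x)) by apply Rabs_pos.
  assert (Rabs (y - x) * (K+1) < eps).
  { apply Rmult_lt_reg_r with (/ (K+1)). apply Rinv_0_lt_compat; lra.
    rewrite Rmult_assoc, Rinv_r, Rmult_1_r by lra. exact Hy. }
  nra.
Qed.

Lemma clamp_lip a1 a2 x y : a1 <= a2 -> Rabs (Rmax a1 (Rmin x a2) - Rmax a1 (Rmin y a2)) <= Rabs (x - y).
Proof.
  intros H. unfold Rmax, Rmin.
  repeat destruct Rle_dec; unfold Rabs; repeat destruct Rcase_abs; lra.
Qed.

Lemma T_root a1 a2 : adm a1 -> adm a2 -> a1 < a2 -> T a1 < 1 -> 1 < T a2 -> exists a, adm a /\ T a = 1.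
Proof.
  intros A1 A2 H12 HT1 HT2.
  destruct (T_lip a1 a2 A1 A2 (Rlt_le _ _ H12)) as [K [HK HL]].
  set (f := fun x => T (Rmax a1 (Rmin x a2)) - 1).
  assert (Hcl : forall x, a1 <= Rmax a1 (Rmin x a2) <= a2).
  { intros x. unfold Rmax, Rmin. repeat destruct Rle_dec; lra. }
  assert (Hc : continuity f).
  { apply (lip_continuity f K HK). intros x y. unfold f.
    replace (T (Rmax a1 (Rmin x a2)) - 1 - (T (Rmax a1 (Rmin y a2)) - 1)) with (T (Rmax a1 (Rmin x a2)) - T (Rmax a1 (Rmin y a2))) by ring.
    eapply Rle_trans; [apply HL; apply Hcl|]. apply Rmult_le_compat_l; auto. apply clamp_lip; lra. }
  assert (E1 : Rmax a1 (Rmin a1 a2) = a1) by (unfold Rmax, Rmin; repeat destruct Rle_dec; lra).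
  assert (E2 : Rmax a1 (Rmin a2 a2) = a2) by (unfold Rmax, Rmin; repeat destruct Rle_dec; lra).
  destruct (IVT f a1 a2 Hc H12) as [z [Hz Hfz]].
  - unfold f. rewrite E1. lra.
  - unfold f. rewrite E2. lra.
  - exists z. assert (Ez : Rmax a1 (Rmin z a2) = z) by (unfold Rmax, Rmin; repeat destruct Rle_dec; lra).
    unfold f in Hfz. rewrite Ez in Hfz. split; [|lra].
    apply (adm_between a1 a2); auto.
Qed.

Definition B (m : R) := 2 * (c*(1+m)/(alpha-1-m) * sqrt kap) * asin (1 / sqrt (km m + 1)).

Lemma kap_pos : 0 < kap.
Proof. unfold kap; apply Rdiv_lt_0_compat; lra. Qed.

Lemma km_bounds m : 0 <= m < alpha - 1 -> 0 < km m <= kap.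
Proof.
  intros Hm. unfold km, kap. split. apply Rdiv_lt_0_compat; lra.
  apply div_le; [lra|]. replace ((alpha-1)/(alpha+1)*(alpha+1+m)) with ((alpha-1) + (alpha-1)/(alpha+1)*m) by (field; lra).
  assert (0 <= (alpha-1)/(alpha+1)*m) by (apply Rmult_le_pos; [apply Rdiv_le_0_compat|]; lra). lra.
Qed.

Lemma GS a t : adm a -> -1 <= t <= 1 -> G (S a t) = Y a t.
Proof. intros. pose proof (Y_pos a t H H0). apply Ginv_spec. lra. Qed.

Lemma small_bound m a : 0 < m < alpha - 1 -> 0 < a -> a*a*(kap+1) <= km m * (m*m) -> adm a /\ T a <= B m.
Proof.
  intros Hm Ha Hcond.
  destruct (km_bounds m) as [Hk1 Hk2]; [lra|].
  pose proof kap_pos as Hkap.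
  assert (Hkm2 : km m * (m*m) <= kap * (m*m)) by (apply Rmult_le_compat_r; nra).
  assert (Haa : a*a <= m*m) by nra.
  assert (Ham : a <= m) by nra.
  assert (Hha : h a <= G m).
  { unfold h. pose proof (G_upper a ltac:(lra)). pose proof (G_lower m m ltac:(lra) ltac:(lra)). nra. }
  assert (HGm : G m < Gm) by (apply G_incr; lra).
  assert (A : adm a) by (split; lra).
  split; auto.
  set (K := km m + 1).
  set (Cm := c*(1+m)/(alpha-1-m)).
  assert (HCm : 0 < Cm) by (apply Rdiv_lt_0_compat; nra).
  assert (Hsk : 0 < sqrt kap) by (apply sqrt_lt_R0; lra).
  assert (Ekap : sqrt kap * sqrt kap = kap) by (apply sqrt_sqrt; lra).
  pose proof (I1_is (Cm * sqrt kap) K ltac:(unfold K; lra)) as HI.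
  unfold B. fold K. fold Cm.
  replace (2 * (Cm * sqrt kap) * asin (1 / sqrt K)) with (RInt (fun t => Cm * sqrt kap / sqrt (K - t*t)) (-1) 1).
  2:{ apply is_RInt_unique. replace (2 * (Cm * sqrt kap) * asin (1 / sqrt K)) with (2 * (Cm * sqrt kap) * asin (1 / sqrt K)) by ring. exact HI. }
  apply RInt_le; [lra| apply T_ex; auto | eexists; exact HI |].
  intros t Ht.
  assert (Ht' : -1 <= t <= 1) by lra.
  destruct (S_range a t A Ht') as [[HS1 HS2] _].
  pose proof (GS a t A Ht') as EGS.
  pose proof (Y_pos a t A Ht') as HYp.
  pose proof (S_bounds a t HYp) as [HS0 HS3].
  set (s := S a t) in *.
  assert (Hsm : s <= m).
  { apply G_le; try lra. rewrite EGS. pose proof (Y_range a t A Ht'). lra. }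
  assert (Hlow : a*a*(K - t*t) <= kap * (s*s)).
  { pose proof (G_upper s ltac:(lra)). pose proof (G_lower m a ltac:(lra) ltac:(lra)).
    unfold Y, h in EGS. unfold K. nra. }
  assert (HKt : 0 < K - t*t) by (unfold K; nra).
  assert (Hq : 0 < sqrt (K - t*t)) by (apply sqrt_lt_R0; lra).
  assert (Eq : sqrt (K - t*t) * sqrt (K - t*t) = K - t*t) by (apply sqrt_sqrt; lra).
  assert (Haq : a * sqrt (K - t*t) <= s * sqrt kap).
  { apply sq_le. apply Rmult_le_pos; lra.
    replace (a * sqrt (K - t*t) * (a * sqrt (K - t*t))) with (a*a*(sqrt (K - t*t) * sqrt (K - t*t))) by ring.
    replace (s * sqrt kap * (s * sqrt kap)) with (s*s*(sqrt kap * sqrt kap)) by ring.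
    rewrite Eq, Ekap. lra. }
  assert (HPhi : Phi s * s <= Cm).
  { unfold Phi, Cm.
    replace (c*(1+s)/(s*(alpha-1-s))*s) with (c*(1+s)/(alpha-1-s)) by (field; lra).
    apply div_le; [lra|].
    replace (c*(1+m)/(alpha-1-m)*(alpha-1-s)) with (c*((1+m)*(alpha-1-s))/(alpha-1-m)) by (field; lra).
    apply le_div; [lra|].
    assert ((1+s)*(alpha-1-m) <= (1+m)*(alpha-1-s)) by nra.
    rewrite Rmult_assoc. apply Rmult_le_compat_l; lra. }
  assert (HP0 : 0 < Phi s) by (apply Phi_pos; lra).
  unfold F. fold s. apply le_div; auto.
  apply Rle_trans with (Phi s * (s * sqrt kap)).
  - replace (a * Phi s * sqrt (K - t*t)) with (Phi s * (a * sqrt (K - t*t))) by ring.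
    apply Rmult_le_compat_l; lra.
  - replace (Phi s * (s * sqrt kap)) with ((Phi s * s) * sqrt kap) by ring.
    apply Rmult_le_compat_r; lra.
Qed.

Lemma B_cont : continuity_pt B 0.
Proof.
  unfold B.
  apply continuity_pt_mult.
  - apply derivable_continuous_pt. apply ex_derive_Reals_0. auto_derive. lra.
  - change (continuity_pt (comp asin (fun m => 1 / sqrt (km m + 1))) 0).
    apply continuity_pt_comp.
    + apply derivable_continuous_pt. apply ex_derive_Reals_0. unfold km. auto_derive.
      assert (0 < (alpha - 1 - 0) / (alpha + 1 + 0) + 1) by (assert (0 < (alpha-1-0)/(alpha+1+0)) by (apply Rdiv_lt_0_compat; lra); lra).
      repeat split; try lra. apply Rgt_not_eq, sqrt_lt_R0; lra.
    + apply derivable_continuous_pt. apply derivable_pt_asin.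
      assert (Hk : 0 < km 0) by (apply (proj1 (km_bounds 0 ltac:(lra)))).
      assert (1 < sqrt (km 0 + 1)) by (apply Rle_lt_trans with (sqrt 1); [rewrite sqrt_1; lra| apply sqrt_lt_1; lra]).
      split. 
      * assert (0 < 1 / sqrt (km 0 + 1)) by (apply Rdiv_lt_0_compat; lra). lra.
      * apply Rmult_lt_reg_r with (sqrt (km 0 + 1)); [lra|]. unfold Rdiv. rewrite Rmult_assoc, Rinv_l; lra.
Qed.

Lemma cont_below (f : R -> R) x L : continuity_pt f x -> f x < L -> exists d, 0 < d /\ forall y, Rabs (y - x) < d -> f y < L.
Proof.
  intros Hc Hl. destruct (Hc (L - f x)) as [d [Hd H]]; [lra|].
  exists d. split; auto. intros y Hy.
  destruct (Req_dec y x) as [->|Hne]; [lra|].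
  assert (Hdist : R_dist (f y) (f x) < L - f x).
  { apply H. split; [split; [exact I| auto]|]. simpl. unfold R_dist. exact Hy. }
  unfold R_dist in Hdist. apply Rabs_def2 in Hdist. lra.
Qed.

Lemma small_exists : B 0 < 1 -> exists r, 0 < r /\ forall a, 0 < a <= r -> adm a /\ T a < 1.
Proof.
  intros HB. destruct (cont_below B 0 1 B_cont HB) as [d [Hd Hd']].
  set (m := Rmin (d/2) ((alpha-1)/2)).
  assert (Hm : 0 < m < alpha - 1) by (unfold m, Rmin; destruct Rle_dec; lra).
  assert (HBm : B m < 1) by (apply Hd'; rewrite Rminus_0_r, Rabs_right; unfold m, Rmin in *; destruct Rle_dec; lra).
  destruct (km_bounds m) as [Hk1 Hk2]; [lra|]. pose proof kap_pos.
  exists (m * km m / (kap + 1)). split.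
  - apply Rdiv_lt_0_compat; [apply Rmult_lt_0_compat|]; lra.
  - intros a Ha. destruct (small_bound m a Hm ltac:(lra)) as [A HT].
    + assert (a * (kap + 1) <= m * km m).
      { destruct Ha as [_ Ha]. apply Rmult_le_reg_r with (/ (kap+1)). apply Rinv_0_lt_compat; lra.
        rewrite Rmult_assoc, Rinv_r, Rmult_1_r by lra. exact Ha. }
      assert (a <= m * km m / (kap+1)) by lra.
      assert (m * km m / (kap+1) <= m) by (apply div_le; nra).
      assert (a * (a * (kap+1)) <= a * (m * km m)) by (apply Rmult_le_compat_l; lra).
      assert (a * (m * km m) <= m * (m * km m)) by (apply Rmult_le_compat_r; nra).
      nra.
    + split; auto. lra.
Qed.

Lemma h_cont x : 0 <= x <= alpha - 1 -> continuity_pt h x.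
Proof. intros. apply derivable_continuous_pt. exists (g x + x). apply h_deriv. lra. Qed.

Lemma big_exists : exists a, adm a /\ 1 < T a.
Proof.
  pose proof Gm_pos as HGm. pose proof kap_pos as Hkap.
  set (al := sqrt (Gm/(kap+1))).
  assert (Hal : 0 < al) by (apply sqrt_lt_R0; apply Rdiv_lt_0_compat; lra).
  assert (Eal : al * al = Gm/(kap+1)) by (apply sqrt_sqrt; apply Rdiv_le_0_compat; lra).
  set (Q := sqrt (2*alpha*(alpha-1))).
  assert (HQ : 0 < Q) by (apply sqrt_lt_R0; nra).
  assert (EQ : Q * Q = 2*alpha*(alpha-1)) by (apply sqrt_sqrt; nra).
  set (M := Q/(al*c)).
  assert (HM : 0 < M) by (apply Rdiv_lt_0_compat; nra).
  set (eps := Rmin (Gm/2) (al*al*exp(-M)/4)).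
  assert (Hexp : 0 < exp (-M)) by apply exp_pos.
  assert (Heps : 0 < eps).
  { assert (0 < al*al*exp(-M)/4) by (apply Rdiv_lt_0_compat; [apply Rmult_lt_0_compat; [nra|]|]; lra).
    unfold eps, Rmin; destruct Rle_dec; lra. }
  assert (Heps1 : eps <= Gm/2) by (unfold eps; apply Rmin_l).
  assert (Heps2 : eps <= al*al*exp(-M)/4) by (unfold eps; apply Rmin_r).
  assert (Hh1 : h (alpha-1) = Gm + (alpha-1)*(alpha-1)/2) by (unfold h, Gm; ring).
  destruct (f_interv_is_interv h 0 (alpha-1) (Gm - eps) ltac:(lra)) as [a [Ha Hha]].
  { rewrite h0, Hh1. split; nra. }
  { apply h_cont. }
  assert (Ha0 : 0 < a).
  { destruct (Rle_lt_or_eq_dec _ _ (proj1 Ha)) as [|E]; auto. rewrite <- E, h0 in Hha. lra. }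
  assert (Ha1 : a < alpha - 1).
  { destruct (Rle_lt_or_eq_dec _ _ (proj2 Ha)) as [|E]; auto. rewrite E, Hh1 in Hha. nra. }
  assert (A : adm a) by (split; [lra|]; rewrite Hha; lra).
  assert (Hala : al <= a).
  { apply sq_le; [lra|]. rewrite Eal. pose proof (G_upper a ltac:(lra)). unfold h in Hha.
    apply div_le; lra. }
  exists a. split; auto.
  set (k := 2*eps/(a*a)).
  assert (Hk : 0 < k) by (apply Rdiv_lt_0_compat; nra).
  assert (Hk2 : k <= exp(-M)/2).
  { unfold k. apply div_le; [nra|]. assert (al*al <= a*a) by nra. nra. }
  set (C2 := al*c/Q).
  assert (HC2 : 0 < C2) by (apply Rdiv_lt_0_compat; nra).
  pose proof (I2_is C2 k Hk) as HI.
  set (r := sqrt (1+k)) in HI.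
  assert (Hr : 1 < r) by (apply Rle_lt_trans with (sqrt 1); [rewrite sqrt_1; lra| apply sqrt_lt_1; lra]).
  assert (Er : r * r = 1 + k) by (apply sqrt_sqrt; lra).
  assert (HV : 1 < C2 * (ln (1 + r) - ln (-1 + r))).
  { rewrite <- ln_div by lra.
    assert (H1 : / k <= (1 + r)/(-1 + r)).
    { apply le_div; [lra|]. replace (/k * (-1+r)) with (1/(r+1)).
      2:{ assert (Ek : k = (r-1)*(r+1)) by nra. rewrite Ek. field. lra. }
      apply div_le; nra. }
    assert (H2 : exp M < / k).
    { assert (exp M * exp (-M) = 1) by (rewrite <- exp_plus; replace (M + -M) with 0 by ring; apply exp_0).
      apply Rmult_lt_reg_r with k; auto. rewrite Rinv_l by lra. 
      assert (0 < exp M) by apply exp_pos. nra. }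
    assert (H3 : M < ln ((1 + r)/(-1 + r))).
    { rewrite <- (ln_exp M). apply ln_increasing. apply exp_pos. lra. }
    assert (C2 * M = 1) by (unfold C2, M; field; split; lra).
    nra. }
  apply Rlt_le_trans with (C2 * (ln (1 + r) - ln (-1 + r))); auto.
  replace (C2 * (ln (1 + r) - ln (-1 + r))) with (RInt (fun t => C2 / sqrt (t*t + k)) (-1) 1) by (apply is_RInt_unique; exact HI).
  apply RInt_le; [lra| eexists; exact HI | apply T_ex; auto |].
  intros t Ht.
  assert (Ht' : -1 <= t <= 1) by lra.
  destruct (S_range a t A Ht') as [[HS1 HS2] _].
  pose proof (GS a t A Ht') as EGS.
  pose proof (Y_pos a t A Ht') as HYp.
  pose proof (S_bounds a t HYp) as [HS0 HS3].
  set (s := S a t) in *.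
  set (y := alpha - 1 - s).
  assert (Hy : 0 < y) by (unfold y; lra).
  assert (Htop : a*(y*y)/(4*alpha) <= a*a*(t*t+k)/2).
  { pose proof (G_top a s ltac:(lra) ltac:(lra)). rewrite EGS in H. unfold Y in H. rewrite Hha in H.
    replace (a*a*(t*t+k)/2) with (eps + a*a*(t*t)/2) by (unfold k; field; lra). unfold y. lra. }
  assert (Hyy : y*y <= 2*alpha*a*(t*t+k)).
  { apply Rmult_le_reg_r with (a/(4*alpha)). apply Rdiv_lt_0_compat; lra.
    replace (y*y*(a/(4*alpha))) with (a*(y*y)/(4*alpha)) by (field; lra).
    replace (2*alpha*a*(t*t+k)*(a/(4*alpha))) with (a*a*(t*t+k)/2) by (field; lra). exact Htop. }
  assert (Hq : 0 < sqrt (t*t+k)) by (apply sqrt_lt_R0; nra).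
  assert (Eq : sqrt (t*t+k) * sqrt (t*t+k) = t*t+k) by (apply sqrt_sqrt; nra).
  assert (HyQ : y <= Q * sqrt (t*t+k)).
  { apply sq_le; [nra|]. replace (Q * sqrt (t*t+k) * (Q * sqrt (t*t+k))) with (Q*Q*(sqrt (t*t+k) * sqrt (t*t+k))) by ring.
    rewrite EQ, Eq. assert (0 <= t*t + k) by nra. nra. }
  assert (HPy : c <= Phi s * y).
  { unfold Phi, y. replace (c*(1+s)/(s*(alpha-1-s))*(alpha-1-s)) with (c*(1+s)/s) by (field; lra).
    apply le_div; lra. }
  assert (HP0 : 0 < Phi s) by (apply Phi_pos; lra).
  apply div_le; auto. unfold F. fold s. unfold C2.
  apply div_le; auto.
  assert (c <= Phi s * (Q * sqrt (t*t+k))).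
  { apply Rle_trans with (Phi s * y); auto. apply Rmult_le_compat_l; lra. }
  assert (al * c <= a * (Phi s * (Q * sqrt (t*t+k)))).
  { apply Rmult_le_compat; lra. }
  nra.
Qed.

Lemma construct a : adm a -> T a = 1 ->
  exists u v : R -> R, stationary_solution c alpha u v /\
    (exists x, 0 <= x <= 1 /\ (u x <> 0 \/ v x <> 0)).
Proof.
  intros A HT. pose proof A as [[Ha0 Ha1] Hha].
  assert (HGa : 0 < G a) by (apply Ga_pos; lra).
  set (t1 := sqrt (1 + G a/(a*a))).
  assert (Ht1s : t1 * t1 = 1 + G a/(a*a)) by (apply sqrt_sqrt; assert (0 < G a/(a*a)) by (apply Rdiv_lt_0_compat; nra); lra).
  assert (Ht1 : 1 < t1).
  { apply Rle_lt_trans with (sqrt 1); [rewrite sqrt_1; lra|]. apply sqrt_lt_1; try lra.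
    assert (0 < G a/(a*a)) by (apply Rdiv_lt_0_compat; nra); lra. assert (0 < G a/(a*a)) by (apply Rdiv_lt_0_compat; nra); lra. }
  assert (HY : forall t, -t1 <= t <= t1 -> 0 < Y a t < Gm).
  { intros t Ht. unfold Y. assert (t*t <= t1*t1) by nra.
    assert (a*a*(t1*t1) = a*a + G a) by (rewrite Ht1s; field; lra).
    unfold h. split; [|unfold h in Hha; nra]. nra. }
  set (X := fun t => RInt (F a) (-1) t).
  set (t2 := (1 + t1)/2).
  assert (Hex : forall p q, -t1 <= p <= t1 -> -t1 <= q <= t1 -> ex_RInt (F a) p q).
  { intros p q Hp Hq. apply (@ex_RInt_continuous R_CompleteNormedModule). intros z Hz.
    apply continuity_pt_filterlim. apply F_cont. apply HY.
    split; [apply Rle_trans with (Rmin p q); [apply Rmin_glb|]|apply Rle_trans with (Rmax p q); [|apply Rmax_lub]]; lra. }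
  assert (HXd : forall t, -t2 <= t <= t2 -> derivable_pt_lim X t (F a t)).
  { intros t Ht. apply is_derive_Reals.
    apply (is_derive_RInt (V:=R_CompleteNormedModule) (F a) X (-1) t).
    - assert (Hd : 0 < t1 - t2) by (unfold t2; lra).
      exists (mkposreal _ Hd). intros b Hb. simpl in Hb.
      unfold ball in Hb; simpl in Hb; unfold AbsRing_ball, abs, minus, plus, opp in Hb; simpl in Hb.
      apply Rabs_def2 in Hb. unfold X. apply RInt_correct. apply Hex; unfold t2 in *; lra.
    - apply continuity_pt_filterlim. apply F_cont. apply HY. unfold t2 in *; lra. }
  assert (HFpos : forall t, -t2 < t < t2 -> 0 < F a t).
  { intros t Ht. unfold F. apply Rmult_lt_0_compat; auto. apply Phi_pos. apply S_bounds. apply HY. unfold t2 in *; lra. }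
  assert (Ht2 : -t2 < t2) by (unfold t2; lra).
  set (Xinv := finv X (-t2) t2).
  assert (HX1 : X (-1) = 0) by (unfold X; apply (RInt_point (V:=R_CompleteNormedModule))).
  assert (HX2 : X 1 = 1) by (unfold X; exact HT).
  assert (HXlo : X (-t2) < 0) by (rewrite <- HX1; apply (inv_incr X (F a) (-t2) t2); auto; unfold t2; lra).
  assert (HXhi : 1 < X t2) by (rewrite <- HX2; apply (inv_incr X (F a) (-t2) t2); auto; unfold t2; lra).
  assert (Hrng : forall x, 0 <= x <= 1 -> X (-t2) < x < X t2) by (intros; lra).
  assert (HXi : forall x, 0 <= x <= 1 -> -t2 <= Xinv x <= t2 /\ X (Xinv x) = x).
  { intros x Hx. apply (finv_spec X (F a)); auto. lra. }
  assert (HXid : forall x, 0 <= x <= 1 -> derivable_pt_lim Xinv x (1 / F a (Xinv x))).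
  { intros x Hx. apply (finv_deriv X (F a)); auto. }
  assert (HXi0 : Xinv 0 = -1) by (rewrite <- HX1; apply (finv_f X (F a)); auto; unfold t2; lra).
  assert (HXi1 : Xinv 1 = 1) by (rewrite <- HX2 at 1; apply (finv_f X (F a)); auto; unfold t2; lra).
  set (sf := fun x => S a (Xinv x)).
  set (df := fun x => a * Xinv x).
  set (sf' := fun x => 1 / g (S a (Xinv x)) * (-(a*a*Xinv x)) * (1 / F a (Xinv x))).
  set (df' := fun x => a * (1 / F a (Xinv x))).
  assert (Hsf : forall x, 0 <= x <= 1 -> derivable_pt_lim sf x (sf' x)).
  { intros x Hx. destruct (HXi x Hx) as [Hb _].
    apply (derivable_pt_lim_comp Xinv (S a) x). apply HXid; auto. apply S_deriv. apply HY. unfold t2 in *; lra. }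
  assert (Hdf : forall x, 0 <= x <= 1 -> derivable_pt_lim df x (df' x)).
  { intros x Hx. unfold df, df'. apply derivable_pt_lim_scal. apply HXid; auto. }
  set (U0 := fun x => (sf x + df x)/2).
  set (V0 := fun x => (sf x - df x)/2).
  set (U0' := fun x => (sf' x + df' x)/2).
  set (V0' := fun x => (sf' x - df' x)/2).
  assert (HU0 : forall x, 0 <= x <= 1 -> derivable_pt_lim U0 x (U0' x)).
  { intros x Hx. unfold U0, U0'. apply (dlim_half (fun y => sf y + df y)).
    apply derivable_pt_lim_plus; auto. }
  assert (HV0 : forall x, 0 <= x <= 1 -> derivable_pt_lim V0 x (V0' x)).
  { intros x Hx. unfold V0, V0'. apply (dlim_half (fun y => sf y - df y)).
    apply derivable_pt_lim_minus; auto. }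
  assert (HSa : forall t, t = -1 \/ t = 1 -> S a t = a).
  { intros t Ht. unfold S. replace (Y a t) with (G a). apply Ginv_G; lra.
    unfold Y, h. destruct Ht; subst t; field. }
  exists (ext U0 U0'), (ext V0 V0'). split.
  - exists (ext' U0'), (ext' V0'). split; [apply ext_deriv; auto|].
    split; [apply ext_deriv; auto|]. split.
    + intros x Hx. destruct (ext_in U0 U0' x Hx) as [E1 E2]. destruct (ext_in V0 V0' x Hx) as [E3 E4].
      rewrite E1, E2, E3, E4.
      destruct (HXi x Hx) as [Hb _].
      assert (HYx : 0 < Y a (Xinv x) < Gm) by (apply HY; unfold t2 in *; lra).
      destruct (S_bounds a (Xinv x) HYx) as [Hs0 Hs1].
      unfold U0, V0, U0', V0', sf, df, sf', df'. unfold F, Phi, g.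
      set (s := S a (Xinv x)) in *. set (t := Xinv x) in *.
      replace (1 + (s + a*t)/2 + (s - a*t)/2) with (1 + s) by field.
      assert (s * (alpha - 1 - s) <> 0) by (apply Rmult_integral_contrapositive; split; lra).
      assert (c*(1+s)/(s*(alpha-1-s)) <> 0).
      { apply Rgt_not_eq, Rdiv_lt_0_compat; apply Rmult_lt_0_compat; lra. }
      repeat split.
      * lra.
      * field. repeat split; lra.
      * field. repeat split; lra.
    + split.
      * destruct (ext_in U0 U0' 0 ltac:(lra)) as [E1 _]. rewrite E1. unfold U0, sf, df.
        rewrite HXi0, HSa by auto. field.
      * destruct (ext_in V0 V0' 1 ltac:(lra)) as [E1 _]. rewrite E1. unfold V0, sf, df.
        rewrite HXi1, HSa by auto. field.
  - exists 1. split; [lra|]. left.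
    destruct (ext_in U0 U0' 1 ltac:(lra)) as [E1 _]. rewrite E1. unfold U0, sf, df.
    rewrite HXi1, HSa by auto. lra.
Qed.

Lemma div_lt a b y : 0 < y -> b < a * y -> b / y < a.
Proof. intros. apply Rmult_lt_reg_r with y; auto. unfold Rdiv. rewrite Rmult_assoc, Rinv_l, Rmult_1_r; lra. Qed.

Lemma cos_PI_minus x : cos (PI - x) = - cos x.
Proof. rewrite cos_minus, cos_PI, sin_PI. ring. Qed.

Lemma tan_PI_minus x : tan (PI - x) = - tan x.
Proof. unfold tan. rewrite sin_PI_x, cos_PI_minus. unfold Rdiv. destruct (Req_dec (cos x) 0) as [E|E].
  - rewrite E. rewrite Ropp_0, Rinv_0. ring.
  - rewrite Rinv_opp. ring. Qed.

Lemma tan_cont x : cos x <> 0 -> continuity_pt tan x.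
Proof.
  intros H. change (continuity_pt (sin / cos)%F x). apply continuity_pt_div; auto.
  apply continuity_sin. apply continuity_cos.
Qed.

Lemma B0_lt b0 : smallest_pos_root c b0 -> PI/2 < b0 < PI -> 1 / Rabs (cos b0) < alpha -> B 0 < 1.
Proof.
  intros [Hb0p [Hcb0 [Hroot Hmin]]] Hb0 Hal0.
  assert (Hc0 : cos b0 < 0) by (apply cos_lt_0; lra).
  rewrite Rabs_left in Hal0 by lra.
  assert (H1 : 1 < alpha * (- cos b0)).
  { apply (Rmult_lt_compat_r (- cos b0)) in Hal0; [|lra].
    replace (1 / - cos b0 * - cos b0) with 1 in Hal0 by (field; lra). lra. }
  assert (Hcb : cos b0 < -1/alpha).
  { apply Rmult_lt_reg_r with alpha; [lra|]. replace (-1/alpha*alpha) with (-1) by (field; lra). nra. }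
  pose proof PI_RGT_0 as HPI.
  set (w := 1 / sqrt (km 0 + 1)).
  assert (Hk0 : km 0 + 1 = 2*alpha/(alpha+1)) by (unfold km; field; lra).
  assert (Hkp : 0 < km 0 + 1) by (rewrite Hk0; apply Rdiv_lt_0_compat; lra).
  assert (Hsq : 0 < sqrt (km 0 + 1)) by (apply sqrt_lt_R0; lra).
  assert (Esq : sqrt (km 0 + 1) * sqrt (km 0 + 1) = km 0 + 1) by (apply sqrt_sqrt; lra).
  assert (Hww : w * w = (alpha+1)/(2*alpha)).
  { unfold w. replace (1 / sqrt (km 0 + 1) * (1 / sqrt (km 0 + 1))) with (1 / (sqrt (km 0 + 1) * sqrt (km 0 + 1))) by (field; lra).
    rewrite Esq, Hk0. field. lra. }
  assert (Hw0 : 0 < w) by (apply Rdiv_lt_0_compat; lra).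
  assert (Hw1 : w < 1).
  { assert (w * w < 1) by (rewrite Hww; apply div_lt; lra). nra. }
  set (th := asin w).
  assert (Hsth : sin th = w) by (apply sin_asin; lra).
  destruct (asin_bound_lt w ltac:(lra)) as [Hth1 Hth2]. fold th in Hth1, Hth2.
  assert (Hth0 : 0 < th).
  { destruct (Rle_or_lt th 0) as [Hle|]; auto.
    assert (0 <= sin (- th)) by (apply sin_ge_0; lra). rewrite sin_neg in H. lra. }
  set (b := 2 * th).
  assert (Hcos : cos b = - 1 / alpha).
  { unfold b. rewrite cos_2a_sin, Hsth. replace (2 * w * w) with (2 * (w * w)) by ring. rewrite Hww. field. lra. }
  assert (Hb1 : 0 < b < PI) by (unfold b; lra).
  assert (Hsin : 0 < sin b) by (apply sin_gt_0; lra).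
  assert (Hsin2 : sin b * sin b = 1 - 1/(alpha*alpha)).
  { pose proof (sin2_cos2 b). unfold Rsqr in H. rewrite Hcos in H.
    replace (-1/alpha * (-1/alpha)) with (1/(alpha*alpha)) in H by (field; lra). lra. }
  assert (Hb2 : PI/2 < b).
  { destruct (Rle_or_lt b (PI/2)) as [Hle|]; auto.
    assert (0 <= cos b) by (apply cos_ge_0; lra). rewrite Hcos in H.
    assert (0 < 1/alpha) by (apply Rdiv_lt_0_compat; lra).
    replace (-1/alpha) with (-(1/alpha)) in H by (field; lra). lra. }
  assert (Hbb0 : b < b0).
  { destruct (Rle_or_lt b0 b) as [Hle|]; auto.
    destruct (Rle_lt_or_eq_dec _ _ Hle) as [Hlt|Heq].
    - assert (cos b < cos b0) by (apply cos_decreasing_1; lra). lra.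
    - rewrite <- Heq in Hcos. lra. }
  assert (Hcosb : cos b <> 0) by (rewrite Hcos; apply Rlt_not_eq; apply Rmult_lt_reg_r with alpha; [lra|];
     replace (-1/alpha*alpha) with (-1) by (field; lra); lra).
  assert (Htanb : tan b = - alpha * sin b) by (unfold tan; rewrite Hcos; field; lra).
  assert (Hf : c * b + tan b < 0).
  { destruct (Rlt_or_le (c*b + tan b) 0) as [|Hge]; auto. exfalso.
    destruct (Rle_lt_or_eq_dec _ _ Hge) as [Hgt|Heq].
    2:{ apply (Hmin b); [lra|auto|lra]. }
    set (M := Rmax (c*PI + 1) (tan (PI - b) + 1)).
    assert (HM1 : c*PI + 1 <= M) by apply Rmax_l.
    assert (HM2 : tan (PI - b) + 1 <= M) by apply Rmax_r.
    set (b' := PI - atan M).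
    destruct (atan_bound M) as [HaM1 HaM2].
    assert (HaM3 : PI - b < atan M).
    { rewrite <- (atan_tan (PI - b)) by lra. apply atan_increasing. lra. }
    assert (Hb'1 : PI/2 < b' < b) by (unfold b'; lra).
    assert (Hfb' : c * b' + tan b' < 0).
    { unfold b'. rewrite tan_PI_minus, tan_atan.
      assert (c * (PI - atan M) < c * PI) by (apply Rmult_lt_compat_l; lra). lra. }
    assert (Hcz : forall z, b' <= z <= b -> cos z <> 0) by (intros z Hz; apply Rlt_not_eq, cos_lt_0; lra).
    destruct (IVT_interv (fun z => c * z + tan z) b' b) as [z [Hz Hfz]].
    - intros z Hz. apply continuity_pt_plus.
      + apply continuity_pt_mult. apply continuity_pt_const; intros ? ?; auto. apply continuity_pt_id.
      + apply tan_cont. apply Hcz; auto.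
    - lra.
    - exact Hfb'.
    - exact Hgt.
    - apply (Hmin z); [lra| apply Hcz; auto | exact Hfz]. }
  assert (Hkap0 : km 0 = kap) by (unfold km, kap; f_equal; ring).
  assert (HP : sqrt kap * (alpha * sin b) = alpha - 1).
  { pose proof kap_pos. assert (0 < sqrt kap) by (apply sqrt_lt_R0; lra).
    assert (Ek : sqrt kap * sqrt kap = kap) by (apply sqrt_sqrt; lra).
    assert (E : (sqrt kap * (alpha * sin b)) * (sqrt kap * (alpha * sin b)) = (alpha - 1) * (alpha - 1)).
    { replace ((sqrt kap * (alpha * sin b)) * (sqrt kap * (alpha * sin b))) with ((sqrt kap * sqrt kap) * (alpha*alpha) * (sin b * sin b)) by ring.
      rewrite Ek, Hsin2. unfold kap. field. lra. }
    assert (0 < sqrt kap * (alpha * sin b)) by (apply Rmult_lt_0_compat; nra).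
    nra. }
  unfold B. fold w. fold th.
  replace (2 * (c * (1 + 0) / (alpha - 1 - 0) * sqrt kap) * th) with (c * b / (alpha * sin b)).
  2:{ assert (Eb : b = 2*th) by reflexivity.
      replace (alpha - 1 - 0) with (sqrt kap * (alpha * sin b)) by lra. rewrite Eb at 1. field. split; [|nra].
      pose proof kap_pos. assert (0 < sqrt kap) by (apply sqrt_lt_R0; lra). lra. }
  apply div_lt. nra. rewrite Htanb in Hf. lra.
Qed.
End Prob.

Theorem mainTheorem7 (c b0 alpha : R) (hc : 0 < c)
  (hb0 : smallest_pos_root c b0) (hb0int : PI / 2 < b0 < PI)
  (halpha : 1 / Rabs (cos b0) < alpha) :
  exists u v : R -> R,
    stationary_solution c alpha u v /\
    (exists x, 0 <= x <= 1 /\ (u x <> 0 \/ v x <> 0)).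
Proof.
  assert (hal : 1 < alpha).
  { assert (Hc0 : cos b0 < 0) by (apply cos_lt_0; lra).
    pose proof (COS_bound b0). rewrite Rabs_left in halpha by lra.
    assert (1 <= 1 / - cos b0) by (apply le_div; lra). lra. }
  pose proof (B0_lt c alpha hc hal b0 hb0 hb0int halpha) as HB.
  destruct (small_exists c alpha hc hal HB) as [r [Hr Hsmall]].
  destruct (big_exists c alpha hc hal) as [a2 [A2 HT2]].
  assert (Ha2 : 0 < a2) by (destruct A2; lra).
  set (a1 := Rmin r (a2/2)).
  assert (Ha1 : 0 < a1 <= r) by (unfold a1, Rmin; destruct Rle_dec; lra).
  assert (Ha12 : a1 < a2) by (unfold a1, Rmin; destruct Rle_dec; lra).
  destruct (Hsmall a1 Ha1) as [A1 HT1].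
  destruct (T_root c alpha hc hal a1 a2 A1 A2 Ha12 HT1 HT2) as [a [A HT]].
  apply (construct c alpha hc hal a A HT).
Qed.
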